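(* Let $p$ be any prime and $G=Z_{p^{\lambda_1}}\times\cdots\times Z_{p^{\lambda_n}}$ with $0<\lambda_1<\lambda_2<\cdots<\lambda_n$ (no repeated factors), and let $\mathbf a$ be a canonical tuple of $G$. Then $$O(\mathbf a)=\bigcup\{T(\mathbf b):\mathbf b\le\mathbf a\text{ and } b_i=a_i\text{ for each nondegenerate coordinate } i \text{ of }\mathbf a\}.$$
   Context: Set $\lambda_0=0$ and $a_0=0$ for any tuple. Tuples are ordered componentwise; $\Lambda(G)=\{\mathbf a\in\mathbb Z^n:\mathbf 0\le\mathbf a\le(\lambda_1,\dots,\lambda_n)\}$. For $\mathbf a\in\Lambda(G)$, $T(\mathbf a)$ is the set of $(g_1,\dots,g_n)\in G$ with $|g_i|=p^{a_i}$ for all $i$, and $O(\mathbf a)$ is the $\mathrm{Aut}(G)$-orbit containing $T(\mathbf a)$ (each type lies in a single orbit). A tuple $\mathbf a$ is canonical if (I) $a_i\ge a_{i-1}$ for $i\in\{2,\dots,n\}$ and (II) $a_{i+1}-a_i\le\lambda_{i+1}-\lambda_i$ for $i\in\{1,\dots,n-1\}$. A canonical $\mathbf a$ is degenerate at coordinate $i$ if $a_i=a_{i-1}$, or ($i\le n-1$ and) $a_{i+1}-a_i=\lambda_{i+1}-\lambda_i$; otherwise $i$ is nondegenerate. *)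

(* Defs.v *)
(* Coordinates are 1-indexed: 1..n, as in the paper.
   Tuples and group elements are functions nat -> nat; only coordinates 1..n matter
   (group elements are required to vanish outside 1..n, so equality is meaningful). *)
From mathcomp Require Import all_boot.
Set Implicit Arguments. Unset Strict Implicit. Unset Printing Implicit Defensive.

Definition coord (n i : nat) : bool := (1 <= i) && (i <= n).

Definition inG (p n : nat) (lam : nat -> nat) (g : nat -> nat) : Prop :=
  (forall i, coord n i -> g i < p ^ lam i) /\ (forall i, ~~ coord n i -> g i = 0).

Definition addG (p n : nat) (lam : nat -> nat) (g h : nat -> nat) : nat -> nat :=
  fun i => if coord n i then (g i + h i) %% p ^ lam i else 0.

Definition ordZ (m x : nat) : nat := m %/ gcdn x m.

Definition isAut (p n : nat) (lam : nat -> nat) (phi : (nat -> nat) -> (nat -> nat)) : Prop :=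
  [/\ (forall g, inG p n lam g -> inG p n lam (phi g)),
      (forall g h, inG p n lam g -> inG p n lam h ->
          phi (addG p n lam g h) = addG p n lam (phi g) (phi h)),
      (forall g h, inG p n lam g -> inG p n lam h -> phi g = phi h -> g = h) &
      (forall h, inG p n lam h -> exists2 g, inG p n lam g & phi g = h)].

Definition inLambda (n : nat) (lam a : nat -> nat) : Prop :=
  forall i, coord n i -> a i <= lam i.

Definition inT (p n : nat) (lam a : nat -> nat) (g : nat -> nat) : Prop :=
  inG p n lam g /\ forall i, coord n i -> ordZ (p ^ lam i) (g i) = p ^ a i.

(* O(a) : the Aut(G)-orbit containing T(a), i.e. the union of the orbits of elements of T(a)
   (T(a) lies in a single orbit, so this is that orbit). *)
Definition inO (p n : nat) (lam a : nat -> nat) (h : nat -> nat) : Prop :=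
  exists phi, exists2 g, isAut p n lam phi /\ inT p n lam a g & h = phi g.

(* convention a_0 = 0 *)
Definition ext0 (a : nat -> nat) (i : nat) : nat := if i == 0 then 0 else a i.

(* canonical tuple: (I) a_i >= a_{i-1} for 2<=i<=n, (II) a_{i+1}-a_i <= lam_{i+1}-lam_i for 1<=i<=n-1
   ((II) written without truncated subtraction) *)
Definition canonical (n : nat) (lam a : nat -> nat) : Prop :=
  (forall i, 2 <= i <= n -> a i.-1 <= a i) /\
  (forall i, 1 <= i < n -> a i.+1 + lam i <= lam i.+1 + a i).

Definition degenerate (n : nat) (lam a : nat -> nat) (i : nat) : Prop :=
  a i = ext0 a i.-1 \/ (i < n /\ a i.+1 + lam i = lam i.+1 + a i).

(* Main.v *)
Require Import Defs.
From mathcomp Require Import all_boot.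
From mathcomp Require Import zify.
From Stdlib Require Import FunctionalExtensionality ClassicalEpsilon Classical.
Set Implicit Arguments. Unset Strict Implicit. Unset Printing Implicit Defensive.

Lemma ordZ_dvd m x t : 0 < m -> (ordZ m x %| t) = (m %| t * x).
Proof.
move=> m0; rewrite /ordZ.
have g0 : 0 < gcdn x m by rewrite gcdn_gt0 m0 orbT.
set g := gcdn x m.
have hm : m = m %/ g * g by rewrite divnK // dvdn_gcdr.
have hx : x = x %/ g * g by rewrite divnK // dvdn_gcdl.
have cop : coprime (m %/ g) (x %/ g).
  rewrite /coprime; apply/eqP.
  have e : g = gcdn (m %/ g) (x %/ g) * g.
    by rewrite muln_gcdl -hm -hx gcdnC.
  move: e; rewrite -{1}(mul1n g) => /eqP; rewrite eqn_pmul2r // => /eqP.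
  by move=> <-.
have -> : (m %| t * x) = (m %/ g * g %| t * (x %/ g * g)) by rewrite -hm -hx.
by rewrite mulnA dvdn_pmul2r // Gauss_dvdl.
Qed.

Lemma ordZ_pow p l x : prime p -> exists2 e, e <= l & ordZ (p ^ l) x = p ^ e.
Proof.
move=> pp; apply/dvdn_pfactor => //.
by rewrite ordZ_dvd ?expn_gt0 ?prime_gt0 // dvdn_mulr.
Qed.

Lemma ordZ_char p l x b k : prime p -> ordZ (p ^ l) x = p ^ b ->
  (p ^ l %| p ^ k * x) = (b <= k).
Proof.
move=> pp e; rewrite -ordZ_dvd ?expn_gt0 ?prime_gt0 // e dvdn_Pexp2l //.
exact: prime_gt1.
Qed.

Lemma shiftD p l k d x : prime p ->
  (p ^ (l + d) %| p ^ (k + d) * x) = (p ^ l %| p ^ k * x).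
Proof.
move=> pp; rewrite !expnD [p ^ l * _]mulnC [p ^ k * _]mulnC -mulnA.
by rewrite dvdn_pmul2l // expn_gt0 prime_gt0.
Qed.

Lemma monoK p l k k' x : k <= k' -> p ^ l %| p ^ k * x -> p ^ l %| p ^ k' * x.
Proof.
move=> le h; rewrite -(subnK le) expnD -mulnA; exact: dvdn_mull.
Qed.

Lemma transfer p li lj aj k x : prime p -> li <= lj -> aj + li <= k + lj ->
  p ^ lj %| p ^ aj * x -> p ^ li %| p ^ k * x.
Proof.
move=> pp le1 le2 h.
rewrite -(@shiftD p li k (lj - li)) //.
have -> : li + (lj - li) = lj by lia.
apply: monoK h; lia.
Qed.

Lemma dvd_modm P m u : 0 < P -> (P %| m * (u %% P)) = (P %| m * u).
Proof.
move=> P0; rewrite {2}(divn_eq u P) mulnDr dvdn_addr //.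
by rewrite mulnA dvdn_mull.
Qed.


Definition zeroG : nat -> nat := fun _ => 0.
Definition mulG p n lam m x := iter m (addG p n lam x) zeroG.

Definition additive p n lam (psi : (nat -> nat) -> (nat -> nat)) :=
  (forall g, inG p n lam g -> inG p n lam (psi g)) /\
  (forall g h, inG p n lam g -> inG p n lam h ->
      psi (addG p n lam g h) = addG p n lam (psi g) (psi h)).

Lemma mulG_coord p n lam m x i :
  mulG p n lam m x i = if coord n i then (m * x i) %% p ^ lam i else 0.
Proof.
elim: m => [|m IH] /=; first by case: coord; rewrite ?mul0n ?mod0n.
rewrite /addG /= in IH *; rewrite IH; case: coord => //.
by rewrite modnDmr mulSn.
Qed.

Lemma inG_zero p n lam : prime p -> inG p n lam zeroG.
Proof. by move=> pp; split=> i //= _; rewrite /zeroG expn_gt0 prime_gt0. Qed.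

Lemma inG_addG p n lam g h : prime p -> inG p n lam (addG p n lam g h).
Proof.
move=> pp; split=> i; rewrite /addG.
  by move=> ->; rewrite ltn_pmod // expn_gt0 prime_gt0.
by move/negbTE=> ->.
Qed.

Lemma inG_mulG p n lam m x : prime p -> inG p n lam (mulG p n lam m x).
Proof. by move=> pp; case: m => [|m] /=; [exact: inG_zero | exact: inG_addG]. Qed.

Lemma addG_zero p n lam : addG p n lam zeroG zeroG = zeroG.
Proof. by apply: functional_extensionality => i; rewrite /addG /zeroG mod0n; case: coord. Qed.

Lemma psi_zero p n lam psi : prime p -> additive p n lam psi -> psi zeroG = zeroG.
Proof.
move=> pp [Gpsi Apsi].
have z0 := inG_zero n lam pp.
have e := Apsi _ _ z0 z0; rewrite addG_zero in e.
have [lt0 out0] := Gpsi _ z0.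
apply: functional_extensionality => i; rewrite /zeroG.
case ci: (coord n i); last by apply: out0; rewrite ci.
have yl := lt0 _ ci.
have e2 := f_equal (fun f => f i) e; rewrite /= /addG ci in e2.
set y := psi zeroG i in yl e2 *.
have : y + y == y + 0 %[mod p ^ lam i] by rewrite addn0 -e2 modn_small.
by rewrite eqn_modDl mod0n modn_small // => /eqP.
Qed.

Lemma psi_mulG p n lam psi m x : prime p -> additive p n lam psi -> inG p n lam x ->
  psi (mulG p n lam m x) = mulG p n lam m (psi x).
Proof.
move=> pp ad xG; rewrite /mulG; elim: m => [|m IH] /=; first by apply: (psi_zero pp ad).
have [_ Apsi] := ad.
have mG := inG_mulG n lam m x pp.
rewrite /mulG in mG IH.
by rewrite Apsi // IH.
Qed.

Lemma key p n lam psi x i k : prime p -> additive p n lam psi -> inG p n lam x ->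
  coord n i ->
  (forall j, coord n j -> j <= i -> p ^ lam j %| p ^ k * x j) ->
  (forall j, coord n j -> i < j -> lam i <= lam j /\ p ^ lam i %| p ^ k * x j) ->
  p ^ lam i %| p ^ k * psi x i.
Proof.
move=> pp ad xG ci Hle Hgt.
have P0 : forall l, 0 < p ^ l by move=> l; rewrite expn_gt0 prime_gt0.
set y := mulG p n lam (p ^ k) x.
pose z := fun j => if coord n j then y j %/ p ^ lam i else 0.
have zG : inG p n lam z.
  split=> j; rewrite /z; last by move/negbTE=> ->.
  move=> cj; rewrite cj; apply: leq_ltn_trans (leq_div _ _) _.
  by rewrite /y mulG_coord cj ltn_pmod.
have yz : y = mulG p n lam (p ^ lam i) z.
  apply: functional_extensionality => j.
  rewrite /y !mulG_coord /z; case cj: (coord n j) => //.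
  rewrite -/y /y mulG_coord cj.
  have [le|lt] := leqP j i.
    have := Hle _ cj le; rewrite /dvdn => /eqP ->.
    by rewrite div0n muln0 mod0n.
  have [lij dv] := Hgt _ cj lt.
  have dv2 : p ^ lam i %| (p ^ k * x j) %% p ^ lam j.
    by rewrite /dvdn (modn_dvdm _ (dvdn_exp2l _ lij)).
  by rewrite [p ^ lam i * _]mulnC divnK // modn_mod.
have e1 := psi_mulG (p ^ k) pp ad xG.
have e2 := psi_mulG (p ^ lam i) pp ad zG.
rewrite -/y yz e2 in e1.
have := f_equal (fun f => f i) e1; rewrite /= !mulG_coord ci.
rewrite modnMr => e; by rewrite /dvdn -e.
Qed.


Lemma lam_le n lam : (forall i, 1 <= i < n -> lam i < lam i.+1) ->
  forall j i, 1 <= j -> j <= i -> i <= n -> lam j <= lam i.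
Proof.
move=> lI j i j1 ji iN.
have -> : i = j + (i - j) by lia.
have : j + (i - j) <= n by lia.
elim: (i - j) => [|d IH] dn; first by rewrite addn0.
have := lI (j + d); rewrite addnS in dn *.
have := IH (ltnW dn); lia.
Qed.

Lemma a_le n lam a : canonical n lam a ->
  forall j i, 1 <= j -> j <= i -> i <= n -> a j <= a i.
Proof.
move=> [cI _] j i j1 ji iN.
have -> : i = j + (i - j) by lia.
have : j + (i - j) <= n by lia.
elim: (i - j) => [|d IH] dn; first by rewrite addn0.
have := cI (j + d).+1; rewrite addnS in dn *; rewrite /=.
have := IH (ltnW dn); lia.
Qed.

Lemma chainII n lam a : canonical n lam a ->
  forall i j, 1 <= i -> i <= j -> j <= n -> a j + lam i <= a i + lam j.
Proof.
move=> [_ cII] i j i1 ij jN.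
have -> : j = i + (j - i) by lia.
have : i + (j - i) <= n by lia.
elim: (j - i) => [|d IH] dn; first by rewrite addn0.
have := cII (i + d); rewrite addnS in dn *.
have := IH (ltnW dn); lia.
Qed.

Lemma left_walk n a : forall i, coord n i -> 0 < a i ->
  exists s, [/\ coord n s, s <= i, a s = a i & a s <> ext0 a s.-1].
Proof.
elim=> [|i IH] ci ai; first by move: ci; rewrite /coord.
case: (boolP (a i.+1 == ext0 a i)) => [/eqP e|ne]; last first.
  by exists i.+1; split=> //= E; rewrite E eqxx in ne.
move: ai e; rewrite /ext0; case: eqP => [-> ai e|i0 ai e]; first by rewrite e in ai.
have ci' : coord n i by move: ci; rewrite /coord; lia.
have [s [cs si es ns]] := IH ci' (ltac:(lia)).
by exists s; split=> //; [lia | rewrite es].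
Qed.

Lemma right_walk n lam a : forall m i, coord n i -> n - i <= m ->
  exists s, [/\ coord n s, i <= s, a s + lam i = a i + lam s &
    ~ (s < n /\ a s.+1 + lam s = lam s.+1 + a s)].
Proof.
elim=> [|m IH] i ci im.
  by exists i; split=> //; move=> [h _]; lia.
case: (classic (i < n /\ a i.+1 + lam i = lam i.+1 + a i)) => [[iN e]|ne]; last first.
  by exists i; split.
have ci' : coord n i.+1 by move: ci; rewrite /coord; lia.
have [s [cs si es ns]] := IH i.+1 ci' (ltac:(lia)).
exists s; split=> //; lia.
Qed.

Lemma pivot n lam a : (forall i, 1 <= i < n -> lam i < lam i.+1) -> canonical n lam a ->
  forall i, coord n i -> 0 < a i -> degenerate n lam a i ->
  exists s, [/\ coord n s, ~ degenerate n lam a s &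
     ((s < i /\ a s = a i) \/ (i < s /\ a s + lam i = a i + lam s))].
Proof.
move=> lI can i ci ai [dl|dr].
  have [s [cs si es ns]] := left_walk ci ai.
  have sne : s != i by apply/eqP => E; subst s; exact: ns (esym (esym dl)).
  have slt : s < i by lia.
  exists s; split=> //; last by left.
  move=> [//|[sN e]].
  have ha : a s.+1 <= a i.
    by apply: (a_le can) => //; move: ci cs; rewrite /coord; lia.
  have hb : a s <= a s.+1.
    by have [cI _] := can; have := cI s.+1; move: cs; rewrite /coord /=; lia.
  have := lI s; move: cs; rewrite /coord; lia.
have [s [cs si es ns]] := @right_walk n lam a (n - i) i ci (leqnn _).
have [iN ei] := dr.
have sne : s != i by apply/eqP => E; subst s; exact: ns dr.
have slt : i < s by lia.
exists s; split=> //; last by right.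
move=> [sl|//].
move: sl ci; rewrite /ext0; case: eqP => [s0 _ ci|s0 sl ci]; first by move: ci; rewrite /coord; lia.
have h1 := chainII can (i := i) (j := s.-1).
have h2 := lI s.-1; have s1 : s.-1.+1 = s by lia. rewrite s1 in h2.
move: ci cs h1 h2; rewrite /coord; lia.
Qed.


Definition trans p n lam (c s : nat -> nat) (x : nat -> nat) : nat -> nat :=
  fun i => if coord n i then (x i + c i * x (s i)) %% p ^ lam i else 0.

Lemma cmod P Ps c u : P %| c * Ps -> c * (u %% Ps) = c * u %[mod P].
Proof.
move=> d; rewrite {2}(divn_eq u Ps) mulnDr -modnDml.
have -> : c * (u %/ Ps * Ps) = u %/ Ps * (c * Ps) by rewrite mulnCA mulnA.
by rewrite (eqP (dvdn_mull _ d)) add0n.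
Qed.

Lemma trans_inG p n lam c s x : prime p -> inG p n lam (trans p n lam c s x).
Proof.
move=> pp; split=> i; rewrite /trans; last by move/negbTE=> ->.
by move=> ->; rewrite ltn_pmod // expn_gt0 prime_gt0.
Qed.

Lemma trans_add p n lam c s : prime p ->
  (forall i, coord n i -> coord n (s i) /\ p ^ lam i %| c i * p ^ lam (s i)) ->
  forall x y, trans p n lam c s (addG p n lam x y) =
              addG p n lam (trans p n lam c s x) (trans p n lam c s y).
Proof.
move=> pp TC x y; apply: functional_extensionality => i.
rewrite /trans /addG; case ci: (coord n i) => //.
have [cs TCi] := TC i ci.
rewrite cs modnDm modnDml -modnDmr (cmod _ TCi) modnDmr.
congr (_ %% _); rewrite !mulnDr; lia.
Qed.

Lemma inv_gen p n lam c1 c2 s y : prime p -> inG p n lam y ->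
  (forall i, coord n i -> [/\ coord n (s i), c2 (s i) = 0 & p ^ lam i %| c1 i + c2 i]) ->
  trans p n lam c1 s (trans p n lam c2 s y) = y.
Proof.
move=> pp [yl yo] H; apply: functional_extensionality => i.
rewrite /trans; case ci: (coord n i); last by rewrite yo // ci.
have [cs c20 d] := H i ci.
rewrite cs c20 mul0n addn0 (modn_small (yl _ cs)) modnDml.
have -> : y i + c2 i * y (s i) + c1 i * y (s i) = (c1 i + c2 i) * y (s i) + y i.
  rewrite mulnDl; lia.
by rewrite -modnDml (eqP (dvdn_mulr _ d)) add0n modn_small // yl.
Qed.

Lemma trans_aut p n lam c s : prime p ->
  (forall i, coord n i -> [/\ coord n (s i), c (s i) = 0 &
                             p ^ lam i %| c i * p ^ lam (s i)]) ->
  isAut p n lam (trans p n lam c s).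
Proof.
move=> pp TC.
have TC3 : forall i, coord n i -> coord n (s i) /\ p ^ lam i %| c i * p ^ lam (s i).
  by move=> i ci; have [] := TC i ci.
split.
- by move=> g _; apply: trans_inG.
- by move=> g h _ _; apply: trans_add.
- move=> g h [gl go] [hl ho] e; apply: functional_extensionality => i.
  case ci: (coord n i); last by rewrite go ?ho // ci.
  have [cs c0 _] := TC i ci.
  have es := f_equal (fun f => f (s i)) e; rewrite /= /trans cs c0 !mul0n !addn0 in es.
  rewrite !modn_small ?gl ?hl // in es.
  have ei := f_equal (fun f => f i) e; rewrite /= /trans ci es in ei.
  move/eqP: ei; rewrite eqn_modDr => /eqP.
  by rewrite !modn_small ?gl ?hl.
- move=> y yG; exists (trans p n lam (fun i => c i * (p ^ lam i).-1) s y).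
    exact: trans_inG.
  apply: inv_gen => // i ci; have [cs c0 d] := TC i ci; split=> //.
    by rewrite c0.
  rewrite -{1}(muln1 (c i)) -mulnDr add1n prednK ?expn_gt0 ?prime_gt0 //.
  exact: dvdn_mull.
Qed.

Definition invf p n lam (phi : (nat -> nat) -> (nat -> nat)) (y : nat -> nat) :=
  epsilon (inhabits zeroG) (fun g => inG p n lam g /\ phi g = y).

Lemma invf_spec p n lam phi y : isAut p n lam phi -> inG p n lam y ->
  inG p n lam (invf p n lam phi y) /\ phi (invf p n lam phi y) = y.
Proof.
move=> [_ _ _ sur] yG; rewrite /invf; apply: (epsilon_spec (inhabits zeroG) (fun g => inG p n lam g /\ phi g = y)).
by have [g gG e] := sur y yG; exists g.
Qed.

Lemma invf_phi p n lam phi g : isAut p n lam phi -> inG p n lam g ->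
  invf p n lam phi (phi g) = g.
Proof.
move=> A gG; have [Gphi _ inj _] := A.
have [h1 h2] := invf_spec A (Gphi _ gG).
exact: inj.
Qed.

Lemma invf_add p n lam phi : prime p -> isAut p n lam phi -> additive p n lam (invf p n lam phi).
Proof.
move=> pp A; have [Gphi Aphi inj _] := A; split.
  by move=> g gG; have [] := invf_spec A gG.
move=> g h gG hG.
have [g1 g2] := invf_spec A gG; have [h1 h2] := invf_spec A hG.
have [k1 k2] := invf_spec A (@inG_addG p n lam g h pp).
apply: inj => //; first exact: inG_addG.
by rewrite k2 Aphi // g2 h2.
Qed.


Theorem mainTheorem6 (p n : nat) (lam a : nat -> nat) :
  prime p ->
  0 < lam 1 ->
  (forall i, 1 <= i < n -> lam i < lam i.+1) ->
  inLambda n lam a ->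
  canonical n lam a ->
  forall h : nat -> nat,
    inO p n lam a h <->
    exists b : nat -> nat,
      [/\ (forall i, coord n i -> b i <= a i),
          (forall i, coord n i -> ~ degenerate n lam a i -> b i = a i) &
          inT p n lam b h].
Proof.
move=> pp lam1 lI aL can h.
have P0 : forall l, 0 < p ^ l by move=> l; rewrite expn_gt0 prime_gt0.
have lamle : forall j i, coord n j -> coord n i -> j <= i -> lam j <= lam i.
  move=> j i; rewrite /coord => /andP[j1 _] /andP[_ iN] ji; exact: (lam_le lI).
split.
- move=> [phi [g [A gT] ->]].
  have [Gphi Aphi inj sur] := A.
  have [gG gord] := gT.
  have hG := Gphi _ gG.
  pose b := fun i => logn p (ordZ (p ^ lam i) (phi g i)).
  have bord : forall i, coord n i -> ordZ (p ^ lam i) (phi g i) = p ^ b i.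
    move=> i ci; have [e _ E] := ordZ_pow (lam i) (phi g i) pp.
    by rewrite /b E pfactorK.
  have ble : forall i, coord n i -> b i <= a i.
    move=> i ci; rewrite -(@ordZ_char p (lam i) (phi g i) (b i) (a i) pp (bord i ci)).
    apply: (@key p n lam phi g i (a i) pp (conj Gphi Aphi) gG ci).
    + move=> j cj ji; rewrite (@ordZ_char p (lam j) (g j) (a j) (a i) pp (gord j cj)).
      apply: (a_le can); move: cj ci; rewrite /coord; lia.
    + move=> j cj ij; have lij : lam i <= lam j by apply: lamle => //; lia.
      split=> //; apply: (@transfer p (lam i) (lam j) (a j) (a i) (g j) pp lij).
        have := chainII can (i := i) (j := j); move: ci cj; rewrite /coord; lia.
      by rewrite (@ordZ_char p (lam j) (g j) (a j) (a j) pp (gord j cj)).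
  exists b; split; [exact: ble| |by split=> // i ci; exact: bord].
  move=> i ci nd.
  have [cI cII] := can.
  have ai1 : ext0 a i.-1 < a i.
    have ne : a i <> ext0 a i.-1 by move=> E; apply: nd; left.
    move: ne; rewrite /ext0; case: eqP => [_|i0 ne]; first lia.
    have := cI i; move: ci; rewrite /coord; lia.
  have rs : forall j, coord n j -> i < j -> a j + lam i < a i + lam j.
    move=> j cj ij.
    have ne : ~ (a i.+1 + lam i = lam i.+1 + a i) by move=> E; apply: nd; right; split=> //; move: cj; rewrite /coord; lia.
    have h1 := cII i; have h2 := chainII can (i := i.+1) (j := j).
    move: ci cj h1 h2 ne; rewrite /coord; lia.
  apply/eqP; rewrite eqn_leq ble //=; rewrite leqNgt; apply/negP => bi.
  have psiA := invf_add pp A.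
  have := @key p n lam (invf p n lam phi) (phi g) i (a i).-1 pp psiA hG ci.
  rewrite invf_phi // (@ordZ_char p (lam i) (g i) (a i) (a i).-1 pp (gord i ci)).
  have -> : (a i <= (a i).-1) = false by lia.
  move=> K; apply: notF; apply: K.
  + move=> j cj ji; rewrite (@ordZ_char p (lam j) (phi g j) (b j) (a i).-1 pp (bord j cj)).
    case: (ltngtP j i) ji => // [jlt _|-> _]; last by lia.
    have := ble j cj; have := a_le can (j := j) (i := i.-1).
    move: ai1 cj ci; rewrite /ext0 /coord; case: eqP => [?|_]; lia.
  + move=> j cj ij; have lij : lam i <= lam j by apply: lamle => //; lia.
    split=> //; apply: (@transfer p (lam i) (lam j) (b j) (a i).-1 (phi g j) pp lij).
      have := rs j cj ij; have := ble j cj; lia.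
    by rewrite (@ordZ_char p (lam j) (phi g j) (b j) (b j) pp (bord j cj)).
- move=> [b [ble bnd [hG hord]]].
  have [hGl hGo] := hG.
  have degb : forall i, coord n i -> b i < a i -> degenerate n lam a i /\ 0 < a i.
    move=> i ci bi; split; last by lia.
    case: (classic (degenerate n lam a i)) => // nd.
    by move: bi; rewrite (bnd i ci nd) ltnn.
  have H : forall i, exists s, (coord n i /\ b i < a i) ->
      [/\ coord n s, b s = a s &
         ((s < i /\ a s = a i) \/ (i < s /\ a s + lam i = a i + lam s))].
    move=> i; case: (classic (coord n i /\ b i < a i)) => [[ci bi]|nc]; last by exists 0.
    have [dg a0] := degb i ci bi.
    have [s [cs ns hs]] := pivot lI can ci a0 dg.
    by exists s => _; split => //; exact: bnd s cs ns.
  pose sf := fun i => proj1_sig (constructive_indefinite_description _ (H i)).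
  have sfP : forall i, coord n i -> b i < a i ->
      [/\ coord n (sf i), b (sf i) = a (sf i) &
         ((sf i < i /\ a (sf i) = a i) \/ (i < sf i /\ a (sf i) + lam i = a i + lam (sf i)))].
    by move=> i ci bi; apply: (proj2_sig (constructive_indefinite_description _ (H i))).
  pose sel := fun i => coord n i && (b i < a i).
  pose s := fun i => if sel i then sf i else i.
  pose c := fun i => if sel i then (if sf i < i then p ^ (lam i - lam (sf i)) else 1) else 0.
  pose c' := fun i => c i * (p ^ lam i).-1.
  have TC : forall i, coord n i -> [/\ coord n (s i), c (s i) = 0 &
                             p ^ lam i %| c i * p ^ lam (s i)].
    move=> i ci; rewrite /s /c; case si: (sel i); last by rewrite !si mul0n dvdn0; split.
    move: si; rewrite /sel ci /= => bi.
    have [cs bs hs] := sfP i ci bi.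
    split=> //; first by rewrite cs bs ltnn.
    case: ifP => slt.
      rewrite -expnD subnK //; apply: lamle => //; lia.
    rewrite mul1n dvdn_exp2l //; apply: lamle => //.
    case: hs => [[? _]|[? _]]; lia.
  have TC' : forall i, coord n i -> [/\ coord n (s i), c' (s i) = 0 &
                             p ^ lam i %| c' i * p ^ lam (s i)].
    move=> i ci; have [cs c0 d] := TC i ci; split=> //.
      by rewrite /c' c0.
    by rewrite /c' mulnAC dvdn_mulr.
  exists (trans p n lam c' s); exists (trans p n lam c s h).
    split; first exact: trans_aut.
    split; first exact: trans_inG.
    move=> i ci.
    have [e eL E] := ordZ_pow (lam i) (trans p n lam c s h i) pp.
    rewrite E; congr (p ^ _).
    have gi : trans p n lam c s h i = (h i + c i * h (s i)) %% p ^ lam i by rewrite /trans ci.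
    case si: (sel i); last first.
      have bi : b i = a i.
        move: si; rewrite /sel ci /= => /negbT; rewrite -leqNgt => ab.
        by apply/eqP; rewrite eqn_leq ab ble.
      move: E; rewrite gi /c si mul0n addn0 modn_small ?hGl // hord // bi.
      move=> E; apply/eqP; rewrite -(eqn_exp2l _ _ (prime_gt1 pp)); exact/eqP.
    move: (si); rewrite /sel ci /= => bi.
    have [cs bs hs] := sfP i ci bi.
    have C : forall k, b i <= k -> (p ^ lam i %| p ^ k * trans p n lam c s h i) = (a i <= k).
      move=> k bk; rewrite gi dvd_modm // mulnDr dvdn_addr; last first.
        by rewrite (@ordZ_char p (lam i) (h i) (b i) k pp (hord i ci)).
      rewrite /c /s si; case: ifP => slt.
        have lsi : lam (sf i) <= lam i by apply: lamle => //; lia.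
        have -> : p ^ lam i = p ^ (lam (sf i) + (lam i - lam (sf i))) by rewrite subnKC.
        rewrite mulnA -expnD shiftD //.
        rewrite (@ordZ_char p (lam (sf i)) (h (sf i)) (b (sf i)) k pp (hord _ cs)) bs.
        by case: hs => [[_ ->]|[? _]] //; lia.
      have [il es] : i < sf i /\ a (sf i) + lam i = a i + lam (sf i).
        by case: hs => [[? _]|//]; lia.
      have lis : lam i <= lam (sf i) by apply: lamle => //; lia.
      rewrite mul1n -(@shiftD p (lam i) k (lam (sf i) - lam i)) //.
      have -> : lam i + (lam (sf i) - lam i) = lam (sf i) by rewrite subnKC.
      rewrite (@ordZ_char p (lam (sf i)) (h (sf i)) (b (sf i)) _ pp (hord _ cs)) bs.
      apply/idP/idP; lia.
    have C1 := C (a i) (ltnW bi).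
    have C2 := C (a i).-1 (ltac:(lia)).
    rewrite (@ordZ_char p (lam i) _ e _ pp E) in C1.
    rewrite (@ordZ_char p (lam i) _ e _ pp E) in C2.
    lia.
  apply: functional_extensionality => i; symmetry; congr (_ i).
  apply: inv_gen => // j cj; have [cs c0 d] := TC j cj; split=> //.
  rewrite /c' -{2}(muln1 (c j)) -mulnDr addn1 prednK //; exact: dvdn_mull.
Qed.
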